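(* For every $\varepsilon>0$, any deterministic algorithm that, given query access to the distance matrix, estimates the graphic TSP cost (respectively the $(1,2)$-TSP cost) of an $n$-vertex instance to within a factor $(2-\varepsilon)$ requires $\Omega(\varepsilon n^2)$ queries.
   Context: For a connected unweighted undirected graph $G=(V,E)$ with $n\ge 2$ vertices, the graphic TSP cost is $\min \sum_{i=1}^{n} d_G(v_i,v_{i+1})$ over cyclic orderings $(v_1,\dots,v_n)$ of $V$ ($v_{n+1}=v_1$), where $d_G$ is shortest-path distance; the distance matrix has entries $d_G(u,v)$. A $(1,2)$-TSP instance is a metric on $n$ points with all distances between distinct points in $\{1,2\}$, cost defined analogously. Estimating to within a factor $c$ means outputting $X$ with $\mathrm{OPT}\le X\le c\,\mathrm{OPT}$. *)

(* Defs.v *)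
From HB Require Import structures.
From mathcomp Require Import all_boot all_order all_fingroup all_algebra.
From mathcomp Require Import reals.
Set Implicit Arguments. Unset Strict Implicit. Unset Printing Implicit Defensive.
Import Order.TTheory GRing.Theory Num.Theory.

(* A deterministic algorithm with query access to a distance matrix
   d : V -> V -> nat is a decision tree: at a node it queries the entry d u v
   and branches on the (natural-number) answer; at a leaf it outputs a value. *)
Inductive qtree (V O : Type) : Type :=
  | Leaf of O
  | Ask of V & V & (nat -> qtree V O).
Arguments Leaf {V O}.
Arguments Ask {V O}.

Fixpoint run_output (V O : Type) (d : V -> V -> nat) (t : qtree V O) : O :=
  match t with
  | Leaf x => x
  | Ask u v k => run_output d (k (d u v))
  end.

Fixpoint run_queries (V O : Type) (d : V -> V -> nat) (t : qtree V O) : nat :=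
  match t with
  | Leaf _ => 0
  | Ask u v k => (run_queries d (k (d u v))).+1
  end.

Definition tour_cost (n : nat) (d : 'I_n -> 'I_n -> nat) (s : {perm 'I_n}) : nat :=
  \sum_(i < n) d (s i) (s (ordS i)).

Definition tsp_opt (n : nat) (d : 'I_n -> 'I_n -> nat) : nat :=
  \big[minn/tour_cost d 1%g]_(s : {perm 'I_n}) tour_cost d s.

(* length of a shortest e-path from u to v (a path of length k is a k-tuple of
   successive vertices); for connected graphs this is < #|T|. *)
Definition gdist (T : finType) (e : rel T) (u v : T) : nat :=
  find (fun k => [exists p : k.-tuple T, path e u p && (last u p == v)])
       (iota 0 #|T|).

Definition graphic_matrix (n : nat) (d : 'I_n -> 'I_n -> nat) : Prop :=
  exists e : rel 'I_n,
    [/\ symmetric e, irreflexive e, (forall u v, connect e u v)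
      & forall u v, d u v = gdist e u v].

(* d is a (1,2)-TSP instance: a metric with all distances between distinct
   points in {1,2} (the triangle inequality then holds automatically) *)
Definition onetwo_matrix (n : nat) (d : 'I_n -> 'I_n -> nat) : Prop :=
  (forall u, d u u = 0%N) /\ (forall u v, d u v = d v u) /\
  (forall u v, u != v -> (d u v == 1%N) || (d u v == 2%N)).

Definition estimates (R : realType) (n : nat) (valid : ('I_n -> 'I_n -> nat) -> Prop)
    (c : R) (t : qtree 'I_n R) : Prop :=
  forall d, valid d ->
    ((tsp_opt d)%:R <= run_output d t)%R /\ (run_output d t <= c * (tsp_opt d)%:R)%R.

Definition query_lower_bound (R : realType) (n : nat)
    (valid : ('I_n -> 'I_n -> nat) -> Prop) (eps bound : R) : Prop :=
  forall t : qtree 'I_n R, estimates valid (2 - eps)%R t ->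
    exists d, valid d /\ (bound <= (run_queries d t)%:R)%R.

(* Main.v *)
Require Import Defs.
From HB Require Import structures.
From mathcomp Require Import all_boot all_order all_fingroup all_algebra.
From mathcomp Require Import reals.
From mathcomp Require Import ring lra.
Import Order.TTheory GRing.Theory Num.Theory.
Set Implicit Arguments. Unset Strict Implicit.

Fixpoint qlist (V O : Type) (d : V -> V -> nat) (t : qtree V O) : seq (V * V) :=
  match t with
  | Leaf _ => [::]
  | Ask u v k => (u, v) :: qlist d (k (d u v))
  end.

Lemma size_qlist (V O : Type) d (t : qtree V O) : size (qlist d t) = run_queries d t.
Proof. by elim: t => //= u v k IH; rewrite IH. Qed.

Lemma run_agree (V : eqType) (O : Type) d d' (t : qtree V O) :
  (forall u v, (u, v) \in qlist d t -> d u v = d' u v) ->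
  run_output d' t = run_output d t.
Proof.
elim: t => //= u v k IH H.
rewrite -H ?mem_head //; apply: IH => x y Hxy; apply: H.
by rewrite in_cons Hxy orbT.
Qed.

Lemma opt_le (n : nat) (d : 'I_n -> 'I_n -> nat) s : tsp_opt d <= tour_cost d s.
Proof.
rewrite /tsp_opt.
have: s \in index_enum {perm 'I_n} by rewrite mem_index_enum.
elim: (index_enum _) => //= x r IH; rewrite in_cons big_cons => /orP [/eqP <-|/IH H].
  by rewrite geq_minl.
by rewrite geq_min H orbT.
Qed.

Lemma opt_ge (n : nat) (d : 'I_n -> 'I_n -> nat) m :
  (forall s, m <= tour_cost d s) -> m <= tsp_opt d.
Proof.
move=> H; rewrite /tsp_opt; apply: (big_ind (fun x => m <= x)) => //.
by move=> x y hx hy; rewrite leq_min hx hy.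
Qed.

Lemma perm_map2 (T : finType) (a b a' b' : T) : a != b -> a' != b' ->
  exists r : {perm T}, r a = a' /\ r b = b'.
Proof.
move=> hab hab'.
exists (tperm a a' * tperm (tperm a a' b) b')%g; rewrite !permM tpermL; split; last by rewrite tpermL.
apply: tpermD; last by rewrite eq_sym.
by rewrite -[X in _ != X](tpermL a a') (inj_eq perm_inj) eq_sym.
Qed.

Definition fib (n : nat) (i j a b : 'I_n) := [set s : {perm 'I_n} | (s i == a) && (s j == b)].

Lemma fib_le n (i j a b a' b' : 'I_n) : a != b -> a' != b' -> #|fib i j a b| <= #|fib i j a' b'|.
Proof.
move=> h h'; have [r [ra rb]] := perm_map2 h h'.
rewrite -(card_imset (fib i j a b) (mulIg r)).
apply: subset_leq_card; apply/subsetP => x /imsetP [s]; rewrite !inE => /andP [/eqP si /eqP sj] ->.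
by rewrite !permM si sj ra rb !eqxx.
Qed.

Lemma fib_diag n (i j a : 'I_n) : i != j -> #|fib i j a a| = 0.
Proof.
move=> hij; apply/eqP; rewrite cards_eq0; apply/eqP/setP => s; rewrite !inE.
apply/negP => /andP [/eqP h1 /eqP h2].
by move: hij; rewrite -(inj_eq (@perm_inj _ s)) h1 h2 eqxx.
Qed.

Lemma perm_sum n (i j : 'I_n) (hij : i != j) (g : 'I_n -> 'I_n -> nat) :
  \sum_(s : {perm 'I_n}) g (s i) (s j) =
  #|fib i j i j| * \sum_a \sum_b (a != b) * g a b.
Proof.
have E : forall s : {perm 'I_n}, g (s i) (s j) =
   \sum_a \sum_b ((s i == a) && (s j == b)) * g a b.
  move=> s; rewrite (bigD1 (s i)) //=.
  rewrite [X in _ = _ + X]big1 ?addn0; last first.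
    by move=> a ha; rewrite big1 // => b _; rewrite eq_sym (negPf ha).
  rewrite (bigD1 (s j)) //=.
  rewrite [X in _ = _ + X]big1 ?addn0 ?eqxx ?mul1n //.
  by move=> b hb; rewrite eq_sym (negPf hb) andbF.
rewrite (eq_bigr _ (fun s _ => E s)) exchange_big big_distrr /=.
apply: eq_bigr => a _; rewrite exchange_big big_distrr /=; apply: eq_bigr => b _.
rewrite -big_distrl /= mulnA; congr (_ * _).
have -> : \sum_(s : {perm 'I_n}) ((s i == a) && (s j == b) : nat) = #|fib i j a b|.
  rewrite -sum1_card [RHS]big_mkcond /=; apply: eq_bigr => s _; rewrite inE; by case: ifP.
have [->|hab] := eqVneq a b; first by rewrite fib_diag // muln0.
rewrite muln1; apply/eqP; rewrite eqn_leq !fib_le // eq_sym.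
Qed.

Lemma ordS_neq n (i : 'I_n) : 1 < n -> ordS i != i.
Proof.
move=> hn; apply/eqP => /(congr1 val) /=.
case: n i hn => [[]//|n] i hn /=.
have := ltn_ord i; rewrite ltnS leq_eqVlt => /orP [/eqP ->|hi].
  by rewrite modnn; case: n i hn.
by rewrite modn_small // => /eqP; rewrite (gtn_eqF (ltnSn _)).
Qed.

Lemma sum_neq n : \sum_(a : 'I_n) \sum_(b : 'I_n) (a != b : nat) = n * (n - 1).
Proof.
rewrite -[in n * _](card_ord n) -sum_nat_const; apply: eq_bigr => a _.
rewrite (bigD1 a) //= eqxx add0n.
rewrite (eq_bigr (fun _ => 1)); last by move=> b hb; rewrite eq_sym hb.
by rewrite sum1_card cardC1 card_ord subn1.
Qed.

Lemma opt_avg n (hn : 1 < n) (d : 'I_n -> 'I_n -> nat) :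
  n * (n - 1) * tsp_opt d <= n * \sum_a \sum_b (a != b) * d a b.
Proof.
set G := \sum_a _.
have KN : forall i : 'I_n, n`! = #|fib i (ordS i) i (ordS i)| * (n * (n - 1)).
  move=> i; have hi : i != ordS i by rewrite eq_sym ordS_neq.
  have := perm_sum hi (fun _ _ => 1); rewrite /= sum_nat_const card_Sn muln1 => ->.
  rewrite -sum_neq.
  by congr (_ * _); apply: eq_bigr => a _; apply: eq_bigr => b _; rewrite muln1.
have H1 : n * (n - 1) * \sum_(s : {perm 'I_n}) tour_cost d s = n * n`! * G.
  rewrite /tour_cost exchange_big big_distrr /=.
  rewrite (eq_bigr (fun _ => n`! * G)); last first.
    move=> i _; have hi : i != ordS i by rewrite eq_sym ordS_neq.
    rewrite (perm_sum hi d) (KN i) /G.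
    by rewrite mulnA [_ * #|_|]mulnC.
  by rewrite sum_nat_const card_ord mulnA.
have H2 : n * (n - 1) * n`! * tsp_opt d <= n * (n - 1) * \sum_(s : {perm 'I_n}) tour_cost d s.
  rewrite -mulnA leq_mul2l; apply/orP; right.
  rewrite -card_Sn -sum_nat_const; apply: leq_sum => s _; exact: opt_le.
rewrite H1 in H2.
by move: H2; rewrite mulnAC [n * n`! * G]mulnAC leq_pmul2r ?fact_gt0.
Qed.

Lemma P0 (T : finType) (e : rel T) (u v : T) :
  [exists p : 0.-tuple T, path e u p && (last u p == v)] = (u == v).
Proof.
apply/existsP/idP => [[p]|h]; first by rewrite tuple0.
by exists [tuple]; rewrite /= h.
Qed.

Lemma P1 (T : finType) (e : rel T) (u v : T) :
  [exists p : 1.-tuple T, path e u p && (last u p == v)] = e u v.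
Proof.
apply/existsP/idP => [[p]|h].
  by case/tupleP: p => x p; rewrite tuple0 /= andbT => /andP [h /eqP <-].
by exists [tuple of [:: v]]; rewrite /= h eqxx.
Qed.

Lemma gdist_star (T : finType) (e : rel T) (c : T) : 2 < #|T| -> irreflexive e ->
  symmetric e -> (forall v, v != c -> e c v) ->
  forall u v, gdist e u v = if u == v then 0 else if e u v then 1 else 2.
Proof.
move=> h3 irr sym hc u v; rewrite /gdist.
case E: #|T| h3 => [|[|[|m]]] // _ /=.
rewrite P0 P1; case: eqVneq => //= huv; case: ifP => //= heuv.
suff -> : [exists p : 2.-tuple T, path e u p && (last u p == v)] by [].
apply/existsP; exists [tuple of [:: c; v]] => /=; rewrite eqxx !andbT.
have hu : u != c by apply: contraFN heuv => /eqP hu; rewrite hu hc // -hu eq_sym.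
have hv : v != c by apply: contraFN heuv => /eqP hv; rewrite sym hv hc // -hv.
by rewrite sym !hc.
Qed.

Lemma tour_lb n (hn : 1 < n) (d : 'I_n -> 'I_n -> nat) (w : 'I_n -> nat) :
  (forall a b, a != b -> 2 <= d a b + w a + w b) ->
  forall s, 2 * n <= tour_cost d s + 2 * \sum_a w a.
Proof.
move=> H s.
have e1 : \sum_(i < n) w (s i) = \sum_a w a.
  by rewrite [RHS](reindex_inj (@perm_inj _ s)).
have e2 : \sum_(i < n) w (s (ordS i)) = \sum_a w a.
  by rewrite [RHS](reindex_inj (inj_comp (@perm_inj _ s) (@ordS_inj n))).
have : \sum_(i < n) 2 <= \sum_(i < n) (d (s i) (s (ordS i)) + w (s i) + w (s (ordS i))).
  apply: leq_sum => i _; apply: H; rewrite (inj_eq perm_inj) eq_sym ordS_neq //.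
by rewrite !big_split /= e1 e2 sum_nat_const card_ord /tour_cost mulnC -addnA addnn -mul2n.
Qed.

Lemma count_L n (L : seq ('I_n * 'I_n)) :
  \sum_(a : 'I_n) \sum_(b : 'I_n) ((a, b) \in L : nat) <= size L.
Proof.
rewrite pair_big /=.
rewrite (eq_bigr (fun p => ((p \in L) : nat))); last by case.
have -> : \sum_(p | true && true) ((p \in L) : nat) = \sum_(p in L) 1.
  by rewrite [RHS]big_mkcond; apply: eq_bigr => p _; case: (p \in L).
by rewrite sum1_card card_size.
Qed.

Lemma G_bound n (L : seq ('I_n * 'I_n)) (d : 'I_n -> 'I_n -> nat) :
  (forall a b, a != b -> d a b <= 1 + ((a, b) \in L) + ((b, a) \in L)) ->
  \sum_a \sum_b (a != b) * d a b <= n * (n - 1) + 2 * size L.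
Proof.
move=> H.
apply: (@leq_trans (\sum_a \sum_b ((a != b : nat) + ((a, b) \in L) + ((b, a) \in L)))).
  apply: leq_sum => a _; apply: leq_sum => b _.
  case: eqVneq => [_|hab]; first by rewrite mul0n.
  by rewrite mul1n H.
rewrite (eq_bigr _ (fun a _ => big_split _ _ _ _ _)) big_split /=.
rewrite (eq_bigr _ (fun a _ => big_split _ _ _ _ _)) big_split /= sum_neq -addnA leq_add2l.
rewrite mul2n -addnn leq_add ?count_L //.
by rewrite exchange_big /= count_L.
Qed.

Definition d12 n (L : seq ('I_n * 'I_n)) (a b : 'I_n) : nat :=
  if a == b then 0 else if ((a, b) \in L) || ((b, a) \in L) then 2 else 1.
Definition d12b n (a b : 'I_n) : nat := if a == b then 0 else 2.

Lemma d12_valid n L : @onetwo_matrix n (d12 L).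
Proof.
rewrite /onetwo_matrix /d12; split; first by move=> u; rewrite eqxx.
split; first by move=> u v; rewrite eq_sym orbC.
by move=> u v /negPf ->; case: ifP.
Qed.

Lemma d12b_valid n : @onetwo_matrix n (@d12b n).
Proof.
rewrite /onetwo_matrix /d12b; split; first by move=> u; rewrite eqxx.
split; first by move=> u v; rewrite eq_sym.
by move=> u v /negPf ->.
Qed.

Definition e0 n (c : 'I_n) (a b : 'I_n) : bool :=
  ((a == c) && (b != c)) || ((b == c) && (a != c)).
Definition e1 n (c : 'I_n) (L : seq ('I_n * 'I_n)) (a b : 'I_n) : bool :=
  e0 c a b || [&& a != c, b != c, a != b, (a, b) \notin L & (b, a) \notin L].

Lemma e0_irr n c : irreflexive (@e0 n c).
Proof. by move=> a; rewrite /e0; case: (a == c). Qed.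
Lemma e0_sym n c : symmetric (@e0 n c).
Proof. by move=> a b; rewrite /e0 orbC. Qed.
Lemma e0_c n c v : v != c -> @e0 n c c v.
Proof. by rewrite /e0 eqxx => ->. Qed.
Lemma e1_irr n c L : irreflexive (@e1 n c L).
Proof. by move=> a; rewrite /e1 e0_irr eqxx /= !andbF. Qed.
Lemma e1_sym n c L : symmetric (@e1 n c L).
Proof.
move=> a b; rewrite /e1 e0_sym; congr (_ || _).
by rewrite (eq_sym a b); case: (a != c); case: (b != c); case: (b != a);
  case: ((a, b) \in L); case: ((b, a) \in L).
Qed.
Lemma e1_c n c L v : v != c -> @e1 n c L c v.
Proof. by move=> h; rewrite /e1 e0_c. Qed.

Lemma star_connect (T : finType) (e : rel T) c : symmetric e ->
  (forall v, v != c -> e c v) -> forall u v, connect e u v.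
Proof.
move=> sym hc u v; apply: (connect_trans (y:=c)).
  case: (eqVneq u c) => [->|h]; first exact: connect0.
  by apply: connect1; rewrite sym hc.
case: (eqVneq v c) => [->|h]; first exact: connect0.
by apply: connect1; rewrite hc.
Qed.

Lemma star_valid n (h3 : 2 < n) c (e : rel 'I_n) : irreflexive e -> symmetric e ->
  (forall v, v != c -> e c v) -> graphic_matrix (gdist e).
Proof.
move=> irr sym hc; exists e; split => //; exact: star_connect hc.
Qed.

Lemma gd n (h3 : 2 < n) c (e : rel 'I_n) : irreflexive e -> symmetric e ->
  (forall v, v != c -> e c v) ->
  forall u v, gdist e u v = if u == v then 0 else if e u v then 1 else 2.
Proof. by move=> irr sym hc; apply: (gdist_star (c:=c)); rewrite ?card_ord. Qed.

Lemma facts12 (O : Type) n (hn : 1 < n) (t : qtree 'I_n O) :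
  let L := qlist (@d12b n) t in
  [/\ run_output (d12 L) t = run_output (@d12b n) t,
      2 * n <= tsp_opt (@d12b n) &
      n * (n - 1) * tsp_opt (d12 L) <= n * (n * (n - 1) + 2 * size L)].
Proof.
move=> L; split.
- apply: run_agree => u v huv; rewrite /d12 /d12b; case: ifP => // _.
  by rewrite huv.
- apply: opt_ge => s.
  have hw : forall a b, a != b -> 2 <= @d12b n a b + 0 + 0.
    by move=> a b hab; rewrite /d12b (negPf hab).
  by have := @tour_lb n hn (@d12b n) (fun _ => 0) hw s; rewrite big1 // muln0 addn0.
- apply: (leq_trans (opt_avg hn _)); rewrite leq_mul2l; apply/orP; right.
  apply: G_bound => a b hab; rewrite /d12 (negPf hab).
  by case: ((a, b) \in L); case: ((b, a) \in L).
Qed.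

Lemma factsG (O : Type) n (h3 : 2 < n) (c : 'I_n) (t : qtree 'I_n O) :
  let L := qlist (gdist (e0 c)) t in
  [/\ run_output (gdist (e1 c L)) t = run_output (gdist (e0 c)) t,
      2 * n <= tsp_opt (gdist (e0 c)) + 2 &
      n * (n - 1) * tsp_opt (gdist (e1 c L)) <= n * (n * (n - 1) + 2 * size L)].
Proof.
have hn : 1 < n by apply: ltnW.
have G0 := gd h3 (@e0_irr n c) (@e0_sym n c) (@e0_c n c).
move=> L.
have G1 := gd h3 (@e1_irr n c L) (@e1_sym n c L) (@e1_c n c L).
split.
- apply: run_agree => u v huv; rewrite G0 G1; case: ifP => // _.
  by rewrite /e1 huv /= !andbF orbF.
- rewrite addnC -leq_subLR; apply: opt_ge => s; rewrite leq_subLR addnC.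
  have hw : forall a b, a != b -> 2 <= gdist (e0 c) a b + (a == c : nat) + (b == c : nat).
    move=> a b hab; rewrite G0 (negPf hab) /e0.
    case: (eqVneq a c) => [ea|ha]; case: (eqVneq b c) => [eb|hb] //=.
  have hs : \sum_(a : 'I_n) (a == c : nat) = 1.
    by rewrite (bigD1 c) //= eqxx big1 ?addn0 // => a /negPf ->.
  have := @tour_lb n hn (gdist (e0 c)) (fun a => (a == c : nat)) hw s.
  by rewrite hs muln1.
- apply: (leq_trans (opt_avg hn _)); rewrite leq_mul2l; apply/orP; right.
  apply: G_bound => a b hab; rewrite G1 (negPf hab) /e1 /e0 hab.
  have [ea|ha] := eqVneq a c; have [eb|hb] := eqVneq b c.
  - by move: hab; rewrite ea eb eqxx.
  - by [].
  - by [].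
  - by case: ((a, b) \in L); case: ((b, a) \in L).
Qed.
Local Open Scope ring_scope.
Lemma arith12 (R : realFieldType) (N Q o1 X eps : R) : 2 <= N -> 0 < eps -> 0 <= Q ->
  0 <= o1 -> 2 * N <= X -> X <= (2 - eps) * o1 ->
  N * (N - 1) * o1 <= N * (N * (N - 1) + 2 * Q) -> Q < eps * N ^+ 2 / 8 -> False.
Proof.
move=> hN he hQ ho hX hXo hNo hQe.
have [h2|h2] := lerP (2 - eps) 0.
  have : (2 - eps) * o1 <= 0 by nra.
  lra.
have h1 : (N - 1) * o1 <= N * (N - 1) + 2 * Q.
  have hN0 : 0 < N by lra.
  rewrite -(ler_pM2l hN0); lra.
have h3 : (N - 1) * X <= (2 - eps) * ((N - 1) * o1).
  have : (N - 1) * X <= (N - 1) * ((2 - eps) * o1) by apply: ler_wpM2l; lra.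
  lra.
have h4 : (2 - eps) * ((N - 1) * o1) <= (2 - eps) * (N * (N - 1) + 2 * Q).
  by apply: ler_wpM2l; lra.
have h5 : (N - 1) * (2 * N) <= (N - 1) * X by apply: ler_wpM2l; lra.
nra.
Qed.

Lemma arithG (R : realFieldType) (N Q o0 o1 X eps : R) : 2 <= N -> 0 < eps -> 0 <= Q ->
  4 + 2 * eps < eps * N ->
  0 <= o1 -> 2 * N <= o0 + 2 -> o0 <= X -> X <= (2 - eps) * o1 ->
  N * (N - 1) * o1 <= N * (N * (N - 1) + 2 * Q) -> Q < eps * N ^+ 2 / 8 -> False.
Proof.
move=> hN he hQ hNe ho hX0 hX hXo hNo hQe.
have [h2|h2] := lerP (2 - eps) 0.
  have : (2 - eps) * o1 <= 0 by nra.
  lra.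
have h1 : (N - 1) * o1 <= N * (N - 1) + 2 * Q.
  have hN0 : 0 < N by lra.
  rewrite -(ler_pM2l hN0); lra.
have h3 : (N - 1) * X <= (2 - eps) * ((N - 1) * o1).
  have : (N - 1) * X <= (N - 1) * ((2 - eps) * o1) by apply: ler_wpM2l; lra.
  lra.
have h4 : (2 - eps) * ((N - 1) * o1) <= (2 - eps) * (N * (N - 1) + 2 * Q).
  by apply: ler_wpM2l; lra.
have h5 : (N - 1) * (2 * N - 2) <= (N - 1) * X by apply: ler_wpM2l; lra.
have h6 : (2 - eps) * (2 * Q) <= 4 * Q by nra.
have h7 : N * (4 + 2 * eps) <= N * (eps * N) by apply: ler_wpM2l; lra.
nra.
Qed.

Lemma nat_cast (R : realType) (n a Q : nat) : (0 < n)%N ->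
  (n * (n - 1) * a <= n * (n * (n - 1) + 2 * Q))%N ->
  n%:R * (n%:R - 1) * a%:R <= n%:R * (n%:R * (n%:R - 1) + 2 * Q%:R) :> R.
Proof.
move=> hn; rewrite -(ler_nat R) !natrM natrD !natrM natrB //.
Qed.

Theorem mainTheorem6 (R : realType) :
  exists c : R, 0 < c /\
    forall eps : R, 0 < eps ->
      exists n0 : nat, forall n : nat, (n0 <= n)%N ->
        query_lower_bound (@graphic_matrix n) eps (c * eps * (n ^ 2)%:R) /\
        query_lower_bound (@onetwo_matrix n) eps (c * eps * (n ^ 2)%:R).
Proof.
exists (1/8); split; first lra.
move=> eps he; exists (Num.Def.truncn (4 / eps)).+3 => n hn.
have h3 : (2 < n)%N by apply: leq_trans hn.
have hn0 : (0 < n)%N by apply: ltn_trans h3.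
have hN2 : 2 <= n%:R :> R by rewrite (ler_nat R 2 n) ltnW.
have hNe : 4 + 2 * eps < eps * n%:R.
  have h1 := truncnS_gt (4 / eps).
  have h2 : ((Num.Def.truncn (4 / eps)).+1%:R + 2 <= n%:R :> R).
    by rewrite -natrD ler_nat addn2.
  have h4 : 4 / eps + 2 < n%:R by lra.
  have : eps * (4 / eps + 2) < eps * n%:R by rewrite ltr_pM2l.
  have e : eps * (4 / eps) = 4 by rewrite mulrCA mulfV ?gt_eqF ?mulr1.
  rewrite mulrDr e; lra.
have hb : forall Q : nat, 1 / 8 * eps * (n ^ 2)%:R = eps * n%:R ^+ 2 / 8 :> R.
  by move=> _; rewrite natrX; field.
split.
- move=> t Hest.
  pose c : 'I_n := Ordinal hn0.
  have [Ha Hb Hc] := factsG h3 c t.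
  set L := qlist _ t in Ha Hb Hc.
  have V0 := star_valid h3 (@e0_irr n c) (@e0_sym n c) (@e0_c n c).
  have V1 := star_valid h3 (@e1_irr n c L) (@e1_sym n c L) (@e1_c n c L).
  exists (gdist (e0 c)); split => //.
  rewrite leNgt; apply/negP => hQ.
  have [H0a H0b] := Hest _ V0.
  have [H1a H1b] := Hest _ V1.
  rewrite Ha in H1b.
  rewrite -size_qlist -/L hb // in hQ.
  apply: (arithG hN2 he _ hNe _ _ H0a H1b (nat_cast R hn0 Hc) hQ).
  + exact: ler0n.
  + exact: ler0n.
  + by move: Hb; rewrite -(ler_nat R) natrD natrM.
- move=> t Hest.
  have [Ha Hb Hc] := facts12 (ltnW h3) t.
  set L := qlist _ t in Ha Hb Hc.
  exists (@d12b n); split; first exact: d12b_valid.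
  rewrite leNgt; apply/negP => hQ.
  have [H0a H0b] := Hest _ (@d12b_valid n).
  have [H1a H1b] := Hest _ (d12_valid L).
  rewrite Ha in H1b.
  rewrite -size_qlist -/L hb // in hQ.
  have H0 : 2 * n%:R <= (tsp_opt (@d12b n))%:R :> R.
    by move: Hb; rewrite -(ler_nat R) natrM.
  apply: (arith12 hN2 he _ _ (le_trans H0 H0a) H1b (nat_cast R hn0 Hc) hQ).
  + exact: ler0n.
  + exact: ler0n.
Qed.
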